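(* Assume (A1). Let $g:\Gamma\to\mathbb R$ and let $u$ be the solution of problem (P) with boundary data $g$. Fix $x\in\mathcal X$ and define the stochastic process $X_0,X_1,X_2,\dots$ on $\mathcal X$ as follows: $X_0=x$; given $X_i$, if $X_i\in\Gamma$ set $X_{i+1}=X_i$; if $X_i\notin\Gamma$, choose $X_{i+1}$ (independently of everything else) by: with probability $\alpha$, $X_{i+1}=y$ with probability $w_{X_i y}/d_{X_i}$ (a random walk step); with probability $\frac12(1-\alpha)$, $X_{i+1}$ is a point of $\operatorname{argmax}_{y\in N_{X_i}}u(y)$; with probability $\frac12(1-\alpha)$, $X_{i+1}$ is a point of $\operatorname{argmin}_{y\in N_{X_i}\cap\Gamma}g(y)$ (ties broken by any fixed rule). Then $Z_i=u(X_i)$ is a sub-martingale with respect to $(X_i)$, i.e. $\mathbb E[Z_{i+1}\mid X_i]\ge Z_i$ for all $i\ge0$.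
   Context: $\mathcal X$ is a finite vertex set and $W=(w_{xy})$ a symmetric matrix of nonnegative weights defining a connected graph, with degrees $d_x=\sum_{y}w_{xy}$ and neighbor sets $N_x=\{y\in\mathcal X:w_{xy}>0\}$. For $p\ge2$, $\alpha=1/(p-1)$, and $$\mathcal L_p u(x)=\alpha\,\frac{1}{d_x}\sum_{y}w_{xy}\big(u(x)-u(y)\big)+(1-\alpha)\Big(u(x)-\tfrac12\big(\max_{N_x}u+\min_{N_x}u\big)\Big).$$ $\Gamma\subset\mathcal X$ is the set of labeled vertices. Problem (P): find $u:\mathcal X\to\mathbb R$ with $\mathcal L_pu(x)=0$ for $x\in\mathcal X\setminus\Gamma$ and $u=g$ on $\Gamma$; since the graph is connected it has a unique solution. Assumption (A1): $\Gamma\cap N_x\neq\varnothing$ for every $x\in\mathcal X$. *)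

(* Defs.v *)
From HB Require Import structures.
From mathcomp Require Import all_boot all_order all_algebra.
Set Implicit Arguments. Unset Strict Implicit. Unset Printing Implicit Defensive.
Import Order.TTheory GRing.Theory Num.Theory.
Local Open Scope ring_scope.

Section Graph.
Variables (R : realFieldType) (T : finType) (w : T -> T -> R).

Definition deg (x : T) : R := \sum_(y : T) w x y.

Definition nbhd (x : T) : {set T} := [set y | 0 < w x y].

(* max / min of u over N_x (seeded with an element of N_x; N_x nonempty under (A1)) *)
Definition maxN (u : T -> R) (x : T) : R :=
  match [pick y in nbhd x] with
  | Some y0 => \big[Num.max/u y0]_(y in nbhd x) u y
  | None => 0
  end.
Definition minN (u : T -> R) (x : T) : R :=
  match [pick y in nbhd x] with
  | Some y0 => \big[Num.min/u y0]_(y in nbhd x) u y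
  | None => 0
  end.

Definition alpha (p : R) : R := 1 / (p - 1).
Definition Lp (p : R) (u : T -> R) (x : T) : R :=
  alpha p * ((deg x)^-1 * \sum_(y : T) w x y * (u x - u y))
  + (1 - alpha p) * (u x - (maxN u x + minN u x) / 2).

Definition connected_graph : Prop :=
  forall x y : T, connect [rel a b | 0 < w a b] x y.

(* transition kernel of the process, given the tie-breaking rules
   smax y \in argmax_{N_y} u  and  smin y \in argmin_{N_y \cap Gamma} g *)
Definition kernel (p : R) (Gam : {set T}) (smax smin : T -> T) (y z : T) : R :=
  if y \in Gam then (z == y)%:R
  else alpha p * (w y z / deg y)
       + (1 - alpha p) / 2 * (z == smax y)%:R
       + (1 - alpha p) / 2 * (z == smin y)%:R.

(* probability of the path X_0 = s 0, ..., X_n = s n, started at x *)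
Definition pathP (p : R) (Gam : {set T}) (smax smin : T -> T) (x : T) (n : nat)
  (s : {ffun 'I_n.+1 -> T}) : R :=
  (s ord0 == x)%:R *
  \prod_(k < n) kernel p Gam smax smin (s (inord k)) (s (inord k.+1)).

(* P(X_i = y, X_{i+1} = z) *)
Definition jointP (p : R) (Gam : {set T}) (smax smin : T -> T) (x : T) (i : nat)
  (y z : T) : R :=
  \sum_(s : {ffun 'I_(i.+2) -> T})
     pathP p Gam smax smin x s * ((s (inord i) == y) && (s (inord i.+1) == z))%:R.

End Graph.

(* Main.v *)
Require Import Defs.
From HB Require Import structures.
From mathcomp Require Import all_boot all_order all_algebra.
From mathcomp Require Import ring lra.
Import Order.TTheory GRing.Theory Num.Theory.
Local Open Scope ring_scope.
Set Implicit Arguments. Unset Strict Implicit.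

Definition upd (I T : finType) (f : {ffun I -> T}) (a : I) (z : T) : {ffun I -> T} :=
  [ffun k => if k == a then z else f k].


Arguments upd {I T}.

Lemma sum_upd (R : realFieldType) (I T : finType) (a : I) (t0 : T)
  (G : {ffun I -> T} -> R) :
  \sum_f G f = \sum_(f : {ffun I -> T} | f a == t0) \sum_z G (upd f a z).
Proof.
rewrite (partition_big (fun f : {ffun I -> T} => f a) predT) //=.
rewrite [RHS]exchange_big /=.
apply: eq_bigr => z _.
rewrite (reindex_onto (fun f => upd f a z) (fun f => upd f a t0)) /=.
  apply: eq_bigl => j; rewrite /upd ffunE eqxx /= eqxx /=.
  apply/eqP/eqP.
    by move=> H; have := congr1 (fun f : {ffun I -> T} => f a) H; rewrite !ffunE eqxx.
  move=> H; apply/ffunP => k; rewrite !ffunE; case: eqP => // ->; by rewrite H.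
move=> f /eqP H; apply/ffunP => k; rewrite /upd !ffunE; case: eqP => // ->; by rewrite H.
Qed.

Lemma sum_ind (R : realFieldType) (T : finType) (a : T) (f : T -> R) :
  \sum_z (z == a)%:R * f z = f a.
Proof.
rewrite (bigD1 a) //= eqxx mul1r big1 ?addr0 // => z /negbTE ->; by rewrite mul0r.
Qed.

Lemma sum_indc (R : realFieldType) (T : finType) (a : T) (c : R) (f : T -> R) :
  \sum_z c * (z == a)%:R * f z = c * f a.
Proof.
under eq_bigr do rewrite -mulrA.
by rewrite -mulr_sumr sum_ind.
Qed.

Lemma alpha_bounds (R : realFieldType) (p : R) : 2 <= p -> 0 <= alpha p <= 1.
Proof.
move=> hp; rewrite /alpha mul1r.
have h1 : 1 <= p - 1 by rewrite lerBrDr.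
have h0 : 0 < p - 1 by apply: lt_le_trans h1.
apply/andP; split; first by rewrite invr_ge0 ltW.
by rewrite invf_le1.
Qed.

Lemma deg_ge0 (R : realFieldType) (T : finType) (w : T -> T -> R) y :
  (forall a b, 0 <= w a b) -> 0 <= deg w y.
Proof. by move=> h; rewrite /deg sumr_ge0. Qed.

Lemma kernel_ge0 (R : realFieldType) (T : finType) (w : T -> T -> R) Gam p smax smin y z :
  (forall a b, 0 <= w a b) -> 2 <= p -> 0 <= kernel w p Gam smax smin y z.
Proof.
move=> hw hp; have /andP [a0 a1] := alpha_bounds hp.
rewrite /kernel; case: ifP => _; first by rewrite ler0n.
have hc : 0 <= (1 - alpha p) / 2 by rewrite divr_ge0 // subr_ge0.
have hd := deg_ge0 y hw.
by rewrite !addr_ge0 // mulr_ge0 // ?ler0n // divr_ge0.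
Qed.

Lemma minN_le (R : realFieldType) (T : finType) (w : T -> T -> R) u y z :
  z \in nbhd w y -> minN w u y <= u z.
Proof.
move=> hz; rewrite /minN; case: pickP => [y0 _|h]; last by have := h z; rewrite hz.
exact: bigmin_le_cond.
Qed.

Lemma inord_neq i k : (k <= i)%N -> (@inord i.+1 k == inord i.+1) = false.
Proof.
move=> h; rewrite -(inj_eq val_inj) /= !inordK //; last by apply: leq_trans h _.
by apply/negbTE; rewrite neq_ltn ltnS h.
Qed.

Unset Implicit Arguments.

Theorem mainTheorem2 (R : realFieldType) (T : finType) (w : T -> T -> R)
  (Gam : {set T}) (p : R) (g u : T -> R) (x : T) (smax smin : T -> T)
  (w_ge0 : forall a b, 0 <= w a b)
  (w_sym : forall a b, w a b = w b a)
  (w_conn : connected_graph w)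
  (hp : 2 <= p)
  (A1 : forall y : T, Gam :&: nbhd w y != set0)
  (u_eq : forall y, y \notin Gam -> Lp w p u y = 0)
  (u_bd : forall y, y \in Gam -> u y = g y)
  (smax_in : forall y, smax y \in nbhd w y)
  (smax_max : forall y, u (smax y) = maxN w u y)
  (smin_in : forall y, smin y \in Gam :&: nbhd w y)
  (smin_min : forall y z, z \in Gam :&: nbhd w y -> g (smin y) <= g z) :
  forall (i : nat) (y : T),
    \sum_(z : T) jointP w p Gam smax smin x i y z * u z
      >= u y * \sum_(z : T) jointP w p Gam smax smin x i y z.
Proof.
have key : forall y, 0 <= \sum_z kernel w p Gam smax smin y z * (u z - u y).
  move=> y; rewrite /kernel; case: (boolP (y \in Gam)) => yG.
    by rewrite sum_ind subrr.
  have /andP [a0 a1] := alpha_bounds hp.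
  under eq_bigr do rewrite !mulrDl.
  rewrite !big_split /= !sum_indc.
  set S := \sum_z w y z * (u y - u z).
  have -> : \sum_z alpha p * (w y z / deg w y) * (u z - u y)
          = - (alpha p * ((deg w y)^-1 * S)).
    rewrite /S !mulr_sumr -sumrN; apply: eq_bigr => z _; rewrite -mulrN -mulrN -mulrN opprB -!mulrA; by rewrite [w y z * _]mulrCA.
  have := u_eq y yG; rewrite /Lp -/S => /eqP; rewrite addr_eq0 => /eqP ->.
  rewrite smax_max.
  have hm := minN_le u (setIP (smin_in y)).2.
  rewrite [X in 0 <= X](_ : _ = (1 - alpha p) / 2 * (u (smin y) - minN w u y)); last by field.
  by rewrite mulr_ge0 // ?subr_ge0 // divr_ge0 // subr_ge0.
move=> i y.
rewrite -subr_ge0 mulr_sumr -sumrB.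
rewrite (eq_bigr (fun z => \sum_(s : {ffun 'I_(i.+2) -> T})
   Defs.pathP w p Gam smax smin x s * ((s (inord i) == y) && (s (inord i.+1) == z))%:R
   * (u z - u y))); last first.
  move=> z _; rewrite [u y * _]mulrC -mulrBr /jointP mulr_suml.
  by apply: eq_bigr => s _.
rewrite exchange_big /=.
rewrite (eq_bigr (fun s : {ffun 'I_(i.+2) -> T} =>
   Defs.pathP w p Gam smax smin x s * (s (inord i) == y)%:R * (u (s (inord i.+1)) - u y)));
  last first.
  move=> s _; rewrite (bigD1 (s (inord i.+1))) //= eqxx andbT big1 ?addr0 //.
  by move=> z /negbTE nz; rewrite [s (inord i.+1) == _]eq_sym nz andbF mulr0 mul0r.
rewrite (sum_upd (inord i.+1) y).
apply: sumr_ge0 => s _.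
set C := (s ord0 == x)%:R *
   \prod_(k < i) kernel w p Gam smax smin (s (inord k)) (s (inord k.+1))
   * (s (inord i) == y)%:R.
rewrite (eq_bigr (fun z => C * (kernel w p Gam smax smin y z * (u z - u y)))); last first.
  move=> z _; rewrite /Defs.pathP big_ord_recr /= /upd !ffunE eqxx !inord_neq //.
  rewrite (eq_bigr (fun k : 'I_i => kernel w p Gam smax smin (s (inord k)) (s (inord k.+1))));
    last by move=> k _; rewrite !ffunE !inord_neq // ltnW.
  have -> : (ord0 == @inord i.+1 i.+1) = false.
    by rewrite -(inj_eq val_inj) /= inordK.
  rewrite /C; set a := s (inord i); clearbody a.
  case E: (_ == y) => /=; [move/eqP: E => -> | ]; ring.
rewrite -mulr_sumr mulr_ge0 //.
rewrite /C !mulr_ge0 ?ler0n //.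
apply: prodr_ge0 => k _; exact: kernel_ge0.
Qed.
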